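(* Let $n\ge3$, $\alpha=(\alpha_2,\dots,\alpha_{n-1})$ positive integers, $N>|\alpha|$, $L=N-|\alpha|$, and $2\le\ell\le n$. There exists a bijection $\phi:W^>\to W^{\le}$ such that: (1) $\phi$ maps $W_k^>$ bijectively onto $W_{k+1}^{\le}$ for each $0\le k\le L-1$; (2) $\mathrm{quinv}'(\phi(w))=\mathrm{quinv}'(w)$ for all $w\in W^>$; (3) the subword of $w$ consisting of the letters $2,\dots,n-1$ equals the corresponding subword of $\phi(w)$.
   Context: $|\alpha|=\sum_i\alpha_i$. For $0\le k\le L$, $W_k$ is the set of words $w=(w_1,\dots,w_N)$ over $\{1,\dots,n\}$ containing exactly $k$ letters $n$, exactly $L-k$ letters $1$, and exactly $\alpha_i$ letters $i$ for $2\le i\le n-1$. $\mathrm{coinv}(w)=\#\{(i,j):i<j,\ w_i<w_j\}$ and $\mathrm{quinv}'(w)=\mathrm{coinv}(w)+\binom{\alpha_\ell}{2}+\cdots+\binom{\alpha_{n-1}}{2}+\binom{k}{2}$ for $w\in W_k$ (the middle sum is empty if $\ell=n$). For $w\in W_k$ let $p_n(w)$ be the position, from the left, of the leftmost $n$ in $w$, and $p_1(w)$ the position, counted from the right, of the rightmost $1$ in the word obtained from $w$ by deleting all $n$'s. $W_k^{\le}$ (resp. $W_k^>$) is the set of $w\in W_k$ with $p_n(w)\le p_1(w)$ (resp. $p_n(w)>p_1(w)$), with the conventions $W_0=W_0^>$ and $W_L=W_L^{\le}$. $W^{\le}=\bigcup_kW_k^{\le}$ and $W^>=\bigcup_kW_k^>$.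 *)

(* Defs.v *)
From mathcomp Require Import all_boot.
Set Implicit Arguments. Unset Strict Implicit. Unset Printing Implicit Defensive.

(* alpha : nat -> nat, only alpha 2, ..., alpha (n-1) are relevant. *)
Definition abs_alpha (n : nat) (alpha : nat -> nat) : nat :=
  \sum_(2 <= i < n) alpha i.

Definition Lval (n : nat) (alpha : nat -> nat) (N : nat) : nat :=
  N - abs_alpha n alpha.

Definition inW (n : nat) (alpha : nat -> nat) (N k : nat) (w : seq nat) : bool :=
  [&& size w == N,
      all (fun x => 1 <= x <= n) w,
      count_mem n w == k,
      count_mem 1 w == Lval n alpha N - k
    & all (fun i => count_mem i w == alpha i) (index_iota 2 n)].

Definition p_n (n : nat) (w : seq nat) : nat := (index n w).+1.

(* position (1-based, from the right) of the rightmost 1 in w with all n's deleted *)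
Definition p_1 (n : nat) (w : seq nat) : nat :=
  (index 1 (rev (filter (fun x => x != n) w))).+1.

(* W_k^<= with the conventions W_0 = W_0^> and W_L = W_L^<= *)
Definition inWle (n : nat) (alpha : nat -> nat) (N k : nat) (w : seq nat) : bool :=
  inW n alpha N k w &&
  ((k == Lval n alpha N) || ((k != 0) && (p_n n w <= p_1 n w))).

Definition inWgt (n : nat) (alpha : nat -> nat) (N k : nat) (w : seq nat) : bool :=
  inW n alpha N k w && ~~ inWle n alpha N k w.

Definition inWle_all n alpha N (w : seq nat) : Prop :=
  exists k, k <= Lval n alpha N /\ inWle n alpha N k w.
Definition inWgt_all n alpha N (w : seq nat) : Prop :=
  exists k, k <= Lval n alpha N /\ inWgt n alpha N k w.

Definition coinv (w : seq nat) : nat :=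
  \sum_(i < size w) \sum_(j < size w) ((i < j) && (nth 0 w i < nth 0 w j)).

(* quinv'(w) for w in W_k, where k = number of letters n in w *)
Definition quinv' (n : nat) (alpha : nat -> nat) (ell : nat) (w : seq nat) : nat :=
  coinv w + \sum_(ell <= i < n) 'C(alpha i, 2) + 'C(count_mem n w, 2).

Definition midword (n : nat) (w : seq nat) : seq nat :=
  filter (fun x => 2 <= x <= n.-1) w.

(* Main.v *)
Require Import Defs.
From mathcomp Require Import all_boot zify.

Lemma count_ord (p : pred nat) (s : seq nat) :
  count p s = \sum_(j < size s) p (nth 0 s j).
Proof.
elim: s => [|x s IH]; first by rewrite big_ord0.
by rewrite big_ord_recl /= IH.
Qed.

Lemma coinv_cons x s : coinv (x :: s) = count (fun y => x < y) s + coinv s.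
Proof.
rewrite /coinv /= big_ord_recl big_ord_recl /= add0n count_ord; congr (_ + _).
apply: eq_bigr => i _; rewrite big_ord_recl /= add0n.
by apply: eq_bigr => j _.
Qed.

Lemma coinv_nil : coinv [::] = 0.
Proof. by rewrite /coinv big_ord0. Qed.

Lemma coinv_mid a x b :
  coinv (a ++ x :: b) = coinv (a ++ b) + count (fun y => x < y) b + count (fun y => y < x) a.
Proof.
elim: a => [|y a IH] /=; first by rewrite coinv_cons addn0 addnC.
rewrite !coinv_cons IH !count_cat /=; lia.
Qed.

Fixpoint ins (n : nat) (u c : seq nat) : seq nat :=
  match u, c with
  | [::], c0 :: _ => nseq c0 n
  | x :: u', c0 :: c' => nseq c0 n ++ x :: ins n u' c'
  | _, [::] => [::]
  end.

Fixpoint gaps (n : nat) (w : seq nat) : seq nat :=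
  match w with
  | [::] => [:: 0]
  | x :: s => if x == n then (head 0 (gaps n s)).+1 :: behead (gaps n s)
              else 0 :: gaps n s
  end.

Fixpoint incr (c : seq nat) (i : nat) : seq nat :=
  match c, i with
  | x :: c', 0 => x.+1 :: c'
  | x :: c', i'.+1 => x :: incr c' i'
  | [::], _ => [::]
  end.

Fixpoint decr (c : seq nat) (i : nat) : seq nat :=
  match c, i with
  | x :: c', 0 => x.-1 :: c'
  | x :: c', i'.+1 => x :: decr c' i'
  | [::], _ => [::]
  end.

Fixpoint wsum (c : seq nat) : nat :=
  match c with [::] => 0 | _ :: c' => sumn c' + wsum c' end.

Definition pos := fun x : nat => 0 < x.

Lemma gaps_nil n s : gaps n s = head 0 (gaps n s) :: behead (gaps n s).
Proof. by case: s => //= x s; case: ifP. Qed.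

Lemma size_gaps n w : size (gaps n w) = (size (filter (fun x => x != n) w)).+1.
Proof.
elim: w => //= x s IH; case: (x == n) => /=; last by rewrite IH.
by rewrite -IH [in RHS]gaps_nil.
Qed.

Lemma ins_S n u c0 c : ins n u (c0.+1 :: c) = n :: ins n u (c0 :: c).
Proof. by case: u. Qed.

Lemma ins_gaps n w : ins n (filter (fun x => x != n) w) (gaps n w) = w.
Proof.
elim: w => //= x s IH; case: eqP => [->|Hx] /=.
  by rewrite ins_S -[in X in ins _ _ X]gaps_nil IH.
by rewrite IH.
Qed.

Section Ins.
Variable n : nat.

Lemma filter_ins (p : pred nat) u c : p n = false -> size c = (size u).+1 ->
  filter p (ins n u c) = filter p u.
Proof.
move=> pn; elim: u c => [|x u IH] [|c0 c] //=.
  by rewrite filter_nseq pn.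
by case=> Hc; rewrite filter_cat filter_nseq pn /= IH.
Qed.

Lemma gaps_nseq m s : gaps n (nseq m n ++ s) = (head 0 (gaps n s) + m) :: behead (gaps n s).
Proof.
elim: m => [|m IH] /=; first by rewrite addn0 -gaps_nil.
by rewrite eqxx IH addnS.
Qed.

Lemma gaps_ins u c : all (fun x => x != n) u -> size c = (size u).+1 ->
  gaps n (ins n u c) = c.
Proof.
elim: u c => [|x u IH] [|c0 c] //=.
  by case: c => // _ _; move: (gaps_nseq c0 [::]); rewrite cats0 /= add0n.
case/andP=> Hx Hu [Hc]; rewrite gaps_nseq /= (negbTE Hx) /= IH //.
Qed.

Lemma size_ins u c : size c = (size u).+1 -> size (ins n u c) = size u + sumn c.
Proof.
elim: u c => [|x u IH] [|c0 c] //=.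
  by case: c => //= _; rewrite size_nseq addn0.
by case=> Hc; rewrite size_cat size_nseq /= IH //; lia.
Qed.

Lemma count_ins (p : pred nat) u c : size c = (size u).+1 ->
  count p (ins n u c) = count p u + p n * sumn c.
Proof.
elim: u c => [|x u IH] [|c0 c] //=.
  by case: c => //= _; rewrite count_nseq addn0.
by case=> Hc; rewrite count_cat count_nseq /= IH //; lia.
Qed.

Lemma all_ins (p : pred nat) u c : all p u -> p n -> all p (ins n u c).
Proof.
move=> + pn; elim: u c => [|x u IH] [|c0 c] //=.
  by rewrite all_nseq pn orbT.
by case/andP=> px pu; rewrite all_cat all_nseq pn orbT /= px IH.
Qed.

Lemma coinv_nseq m s : all (fun y => y <= n) s -> coinv (nseq m n ++ s) = coinv s.
Proof.
move=> Hs; elim: m => //= m IH; rewrite coinv_cons IH.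
suff -> : count (fun y => n < y) (nseq m n ++ s) = 0 by [].
apply/eqP; rewrite -leqn0 leqNgt -has_count; apply/hasPn => y.
rewrite mem_cat mem_nseq => /orP[/andP[_ /eqP->]|ys]; first by rewrite ltnn.
by rewrite -leqNgt; move/allP: Hs => /(_ y ys).
Qed.

Lemma coinv_ins u c : all (fun x => x < n) u -> size c = (size u).+1 ->
  coinv (ins n u c) = coinv u + wsum c.
Proof.
elim: u c => [|x u IH] [|c0 c] //=.
  by case: c => //= _; rewrite -(cats0 (nseq _ _)) coinv_nseq // coinv_nil.
case/andP=> Hx Hu [Hc]; rewrite coinv_nseq; last first.
  rewrite /= ltnW //=; apply: all_ins; first by apply: sub_all Hu => y /ltnW.
  by [].
rewrite !coinv_cons IH // count_ins // Hx mul1n; lia.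
Qed.

Lemma index_ins u c : all (fun x => x != n) u -> size c = (size u).+1 ->
  index n (ins n u c) = minn (find pos c) (size u).
Proof.
elim: u c => [|x u IH] [|c0 c] //=.
  case: c => // _ _; case: c0 => //= c0; by rewrite eqxx.
case/andP=> Hx Hu [Hc]; rewrite /pos; case: c0 => [|c0] /=.
  by rewrite (negbTE Hx) IH // minnSS.
by rewrite eqxx.
Qed.

End Ins.

Lemma size_incr c i : size (incr c i) = size c.
Proof. by elim: c i => [|x c IH] [|i] //=; rewrite IH. Qed.

Lemma size_decr c i : size (decr c i) = size c.
Proof. by elim: c i => [|x c IH] [|i] //=; rewrite IH. Qed.

Lemma sumn_incr c i : i < size c -> sumn (incr c i) = (sumn c).+1.
Proof. by elim: c i => [|x c IH] [|i] //= Hi; rewrite ?IH //; lia. Qed.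

Lemma sumn_decr c i : 0 < nth 0 c i -> sumn (decr c i) = (sumn c).-1.
Proof.
elim: c i => [|x c IH] [|i] //= Hi; first by lia.
rewrite IH //; have : 0 < sumn c.
  elim: c i Hi {IH} => [|y c IH] [|i] //= Hi; first by lia.
  by have := IH _ Hi; lia.
lia.
Qed.

Lemma wsum_incr c i : i < size c -> wsum (incr c i) = wsum c + i.
Proof.
elim: c i => [|x c IH] [|i] //= Hi; first by lia.
rewrite IH // sumn_incr //; lia.
Qed.

Lemma find_incr c i : i < size c -> i <= find pos c -> find pos (incr c i) = i.
Proof.
elim: c i => [|x c IH] [|i] //= Hi; rewrite /pos //.
case: x => //= Hf; congr _.+1; apply: IH => //.
Qed.

Lemma decr_incr c i : decr (incr c i) i = c.
Proof. by elim: c i => [|x c IH] [|i] //=; rewrite IH. Qed.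

Lemma incr_decr c i : 0 < nth 0 c i -> incr (decr c i) i = c.
Proof. elim: c i => [|x c IH] [|i] //= Hi; [by rewrite prednK | by rewrite IH]. Qed.

Lemma find_decr c : find pos c <= find pos (decr c (find pos c)).
Proof.
elim: c => [|x c IH] //=; rewrite /pos; case: x => //= x.
Qed.

Lemma nth_find_pos c : 0 < sumn c -> 0 < nth 0 c (find pos c).
Proof.
move=> H; have : has pos c.
  apply/hasP; elim: c H => [|x c IH] //= H.
  case: x H => [|x] H; last by exists x.+1; rewrite ?inE ?eqxx.
  by case: (IH H) => y ys py; exists y; rewrite ?inE ?ys ?orbT.
by move/(nth_find 0).
Qed.

Lemma find_pos_lt c : 0 < sumn c -> find pos c < size c.
Proof.
move=> H; rewrite -has_find; apply/hasP.
elim: c H => [|x c IH] //= H.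
case: x H => [|x] H; last by exists x.+1; rewrite ?inE ?eqxx.
by case: (IH H) => y ys py; exists y; rewrite ?inE ?ys ?orbT.
Qed.

Lemma find_pos_size c : sumn c = 0 -> find pos c = size c.
Proof. elim: c => [|x c IH] //=; rewrite /pos; case: x => //= H; by rewrite IH. Qed.

Lemma split_at (x : nat) v : x \in v ->
  v = take (index x v) v ++ x :: drop (index x v).+1 v.
Proof.
move=> xv; rewrite -{1}(cat_take_drop (index x v) v) (drop_nth 0) ?index_mem //.
by rewrite nth_index.
Qed.

Lemma notin_take_index (x : nat) v : x \in v -> x \notin take (index x v) v.
Proof. by move=> xv; rewrite in_take // ltnn. Qed.

Lemma rev_mid (a : seq nat) x b : rev (a ++ x :: b) = rev b ++ x :: rev a.
Proof. by rewrite rev_cat rev_cons cat_rcons. Qed.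

Definition phi n w :=
  let u := filter (fun x => x != n) w in let v := rev u in let j := index 1 v in
  ins n (rev (take j v ++ drop j.+1 v)) (incr (behead (gaps n w)) j).

Definition psi n w :=
  let u := filter (fun x => x != n) w in let v := rev u in
  let s := find pos (gaps n w) in
  ins n (rev (take s v ++ 1 :: drop s v)) (0 :: decr (gaps n w) s).

Lemma phi_ins n u c : all (fun x => x != n) u -> size c = (size u).+1 ->
  phi n (ins n u c) =
  ins n (rev (take (index 1 (rev u)) (rev u) ++ drop (index 1 (rev u)).+1 (rev u)))
        (incr (behead c) (index 1 (rev u))).
Proof. by move=> Hu Hc; rewrite /phi /= filter_ins ?eqxx // gaps_ins // (all_filterP Hu). Qed.

Lemma psi_ins n u c : all (fun x => x != n) u -> size c = (size u).+1 ->
  psi n (ins n u c) =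
  ins n (rev (take (find pos c) (rev u) ++ 1 :: drop (find pos c) (rev u)))
        (0 :: decr c (find pos c)).
Proof. by move=> Hu Hc; rewrite /psi /= filter_ins ?eqxx // gaps_ins // (all_filterP Hu). Qed.

Lemma all_neq n u : all (fun x => 1 <= x < n) u -> all (fun x => x != n) u.
Proof. by apply: sub_all => x /andP[_ H]; rewrite neq_ltn H. Qed.

Lemma inW_ins n alpha N k u c : 3 <= n -> all (fun x => 1 <= x < n) u ->
  size c = (size u).+1 ->
  inW n alpha N k (ins n u c) =
  [&& size u + sumn c == N, sumn c == k, count_mem 1 u == Lval n alpha N - k
    & all (fun i => count_mem i u == alpha i) (index_iota 2 n)].
Proof.
move=> Hn Hu Hc; have Hun := @all_neq n u Hu.
have Hnu : count_mem n u = 0.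
  apply/count_memPn; apply/negP => /(allP Hun); by rewrite eqxx.
rewrite /inW size_ins // all_ins //; last first.
- by rewrite leqnn andbT; lia.
- by apply: sub_all Hu => x /andP[-> /ltnW].
rewrite !count_ins // Hnu /=.
have -> : (n == n) = true by apply/eqP.
rewrite mul1n add0n.
have -> : (n == 1) = false by apply/eqP; lia.
rewrite mul0n addn0; congr [&& _, _, _ & _].
apply: eq_in_all => i; rewrite mem_index_iota => /andP[_ Hi].
rewrite count_ins //; have -> : pred1 i n = false by apply/eqP; lia.
by rewrite mul0n addn0.
Qed.

Lemma pn_ins n u c : all (fun x => x != n) u -> size c = (size u).+1 ->
  p_n n (ins n u c) = (minn (find pos c) (size u)).+1.
Proof. by move=> Hu Hc; rewrite /p_n index_ins. Qed.

Lemma p1_ins n u c : all (fun x => x != n) u -> size c = (size u).+1 ->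
  p_1 n (ins n u c) = (index 1 (rev u)).+1.
Proof. by move=> Hu Hc; rewrite /p_1 filter_ins ?eqxx // (all_filterP Hu). Qed.

Lemma phi_good n alpha N ell k u c : 3 <= n -> all (fun x => 1 <= x < n) u ->
  size c = (size u).+1 -> k < Lval n alpha N -> inWgt n alpha N k (ins n u c) ->
  [/\ inWle n alpha N k.+1 (phi n (ins n u c)),
      quinv' n alpha ell (phi n (ins n u c)) = quinv' n alpha ell (ins n u c),
      midword n (phi n (ins n u c)) = midword n (ins n u c)
    & psi n (phi n (ins n u c)) = ins n u c].
Proof.
move=> Hn Hu Hc HkL; have Hun := @all_neq n u Hu.
move=> Hg; rewrite /inWgt /inWle !inW_ins // pn_ins // p1_ins // in Hg.
case/andP: Hg => /and4P[HN Hk H1 Hi].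
rewrite HN Hk H1 Hi /= => Hcond.
rewrite phi_ins //.
set v := rev u; set j := index 1 v.
have Hv1 : 1 \in v.
  rewrite mem_rev -has_pred1 has_count; move/eqP: H1 => ->; lia.
have Hj : j < size v by rewrite index_mem.
have Hjf : j < find pos c.
  case: (posnP k) => [k0|kpos].
    move: Hk; rewrite k0 => /eqP/find_pos_size ->; rewrite Hc -(size_rev u).
    exact: ltnW.
  move: Hcond; rewrite (ltn_eqF HkL) /= -lt0n kpos /= ltnS -ltnNge.
  by rewrite leq_min => /andP[].
case: c Hc Hk Hjf HN {Hcond} => [|c0 b] //= [Hb] Hk.
case: c0 Hk => [|c0] Hk; last by rewrite /pos.
rewrite add0n in Hk; move=> Hjf HN; rewrite add0n in HN.
have Hvs : v = take j v ++ 1 :: drop j.+1 v by apply: split_at.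
have Ha1 : 1 \notin take j v by apply: notin_take_index.
set a := take j v in Hvs Ha1 *; set d := drop j.+1 v in Hvs *.
have Hsa : size a = j by rewrite size_take Hj.
have Hue : u = rev (a ++ 1 :: d) by rewrite -Hvs revK.
have Hallv : all (fun x => 1 <= x < n) (a ++ 1 :: d) by rewrite -Hvs all_rev.
have Hu' : all (fun x => 1 <= x < n) (rev (a ++ d)).
  by move: Hallv; rewrite all_rev !all_cat /= => /and3P[-> _ ->].
have Hsv : size v = size a + (size d).+1 by rewrite Hvs size_cat.
have Hsizeu : size u = size v by rewrite /v size_rev.
have Hcnt : forall i, count_mem i u = count_mem i (rev (a ++ d)) + (1 == i).
  move=> i; rewrite Hue !count_rev !count_cat /=; lia.
have Hsb' : size (incr b j) = (size (rev (a ++ d))).+1.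
  rewrite size_incr Hb size_rev size_cat Hsizeu Hsv; lia.
have Hjb : j < size b by rewrite Hb Hsizeu.
have Hun' := @all_neq n _ Hu'.
have Hc0 : size (0 :: b) = (size u).+1 by rewrite /= Hb.
have Hjfb : j <= find pos b by move: Hjf; rewrite /pos /=.
split.
- rewrite /inWle inW_ins // pn_ins // p1_ins // sumn_incr //.
  apply/andP; split.
    apply/and4P; split.
    + move/eqP: HN => <-; apply/eqP; rewrite size_rev size_cat Hsizeu Hsv; lia.
    + by rewrite (eqP Hk).
    + move/eqP: H1; rewrite Hcnt eqxx => H1'; apply/eqP; lia.
    + apply/allP => i ii; move/allP: Hi => /(_ i ii).
      rewrite mem_index_iota in ii.
      rewrite Hcnt; have -> : (1 == i) = false by apply/eqP; lia.
      by rewrite addn0.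
  apply/orP; right; apply/andP; split => //; rewrite ltnS; apply: leq_trans (geq_minl _ _) _.
  rewrite find_incr //.
  by rewrite revK index_cat (negbTE Ha1) Hsa leq_addr.
- have Hul : all (fun x => x < n) u by apply: sub_all Hu => x /andP[].
  have Hul' : all (fun x => x < n) (rev (a ++ d)) by apply: sub_all Hu' => x /andP[].
  rewrite /quinv' !coinv_ins //.
  rewrite !count_ins //=.
  have -> : count_mem n (rev (a ++ d)) = 0.
    apply/count_memPn; apply/negP => /(allP Hun'); by rewrite eqxx.
  have -> : count_mem n u = 0.
    apply/count_memPn; apply/negP => /(allP Hun); by rewrite eqxx.
  have -> : (n == n) = true by apply/eqP.
  rewrite sumn_incr // wsum_incr // (eqP Hk) Hue rev_mid coinv_mid rev_cat.
  have -> : count (fun y => 1 < y) (rev a) = j.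
    rewrite count_rev -Hsa; apply/eqP; rewrite -all_count; apply/allP => y ya.
    move: Hallv; rewrite all_cat => /andP[/allP /(_ y ya) /andP[Hy _] _].
    rewrite ltn_neqAle Hy andbT eq_sym; apply/negP => /eqP Hy1.
    by move: Ha1; rewrite -Hy1 ya.
  have -> : count (fun y => y < 1) (rev d) = 0.
    apply/eqP; rewrite -leqn0 leqNgt -has_count; apply/hasPn => y.
    rewrite mem_rev => yd.
    move: Hallv; rewrite all_cat /= => /and3P[_ _ /allP /(_ y yd) /andP[Hy _]].
    by rewrite -leqNgt.
  rewrite !add0n !mul1n binS bin1; lia.
- rewrite /midword !filter_ins //.
  + by rewrite Hue filter_rev filter_cat /= filter_rev filter_cat.
  + by case: (n) Hn => [|m] //= _; rewrite ltnn andbF.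
  + by case: (n) Hn => [|m] //= _; rewrite ltnn andbF.
- rewrite psi_ins // revK find_incr //.
  rewrite take_size_cat // drop_size_cat // decr_incr.
  by rewrite -Hue.
Qed.

Lemma psi_good n alpha N k u c : 3 <= n -> all (fun x => 1 <= x < n) u ->
  size c = (size u).+1 -> k < Lval n alpha N -> inWle n alpha N k.+1 (ins n u c) ->
  inWgt n alpha N k (psi n (ins n u c)) /\ phi n (psi n (ins n u c)) = ins n u c.
Proof.
move=> Hn Hu Hc HkL; have Hun := @all_neq n u Hu.
move=> Hg; rewrite /inWle inW_ins // pn_ins // p1_ins // in Hg.
case/andP: Hg => /and4P[HN Hk H1 Hi] Hcond.
rewrite psi_ins //.
set v := rev u; set s := find pos c.
have Hsp : 0 < sumn c by rewrite (eqP Hk).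
have Hs : s < size c by apply: find_pos_lt.
have Hsu : s <= size u by rewrite -ltnS -Hc.
have Hsv : s <= size v by rewrite size_rev.
have Hsi : s <= index 1 v.
  case/orP: Hcond => [/eqP HL|/andP[_]].
    have H0 : count_mem 1 u = 0 by rewrite (eqP H1) -HL subnn.
    have : 1 \notin v by rewrite mem_rev; apply/count_memPn.
    by move/memNindex => ->.
  by rewrite ltnS; move/minn_idPl: Hsu => ->.
have Ha1 : 1 \notin take s v.
  by apply/negP => /index_ltn; rewrite ltnNge Hsi.
set a := take s v in Ha1 *; set d := drop s v.
have Hvs : v = a ++ d by rewrite cat_take_drop.
have Hsa : size a = s by rewrite size_take_min; apply/minn_idPl.
have Hallv : all (fun x => 1 <= x < n) (a ++ d) by rewrite -Hvs all_rev.
have Hu2 : all (fun x => 1 <= x < n) (rev (a ++ 1 :: d)).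
  move: Hallv; rewrite all_rev !all_cat /= => /andP[-> ->].
  by rewrite andbT; lia.
have Hun2 := @all_neq n _ Hu2.
have Hns : 0 < nth 0 c s by apply: nth_find_pos.
have Hcnt : forall i, count_mem i (rev (a ++ 1 :: d)) = count_mem i u + (1 == i).
  move=> i; rewrite -[u]revK -/v Hvs !count_rev !count_cat /=; lia.
have Hsz : size (rev (a ++ 1 :: d)) = (size u).+1.
  rewrite size_rev size_cat /= -[u]revK -/v Hvs size_rev size_cat; lia.
have Hc2 : size (0 :: decr c s) = (size (rev (a ++ 1 :: d))).+1.
  by rewrite /= size_decr Hc Hsz.
split.
- rewrite /inWgt /inWle inW_ins // pn_ins // p1_ins //.
  have HW : [&& size (rev (a ++ 1 :: d)) + sumn (0 :: decr c s) == N,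
     sumn (0 :: decr c s) == k,
     count_mem 1 (rev (a ++ 1 :: d)) == Lval n alpha N - k
   & all (fun i => count_mem i (rev (a ++ 1 :: d)) == alpha i) (index_iota 2 n)].
    apply/and4P; split.
    + rewrite Hsz /= sumn_decr // (eqP Hk) /=; move/eqP: HN => <-; apply/eqP.
      rewrite (eqP Hk); lia.
    + by rewrite /= sumn_decr // (eqP Hk).
    + rewrite Hcnt (eqP H1); apply/eqP; have -> : (1 == 1) = true by apply/eqP.
      lia.
    + apply/allP => i ii; move/allP: Hi => /(_ i ii).
      rewrite mem_index_iota in ii.
      rewrite Hcnt; have -> : (1 == i) = false by apply/eqP; lia.
      by rewrite addn0.
  rewrite HW /= (ltn_eqF HkL) /= negb_and negbK -ltnNge.
  apply/orP; right; rewrite revK index_cat (negbTE Ha1) /= Hsa addn0.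

  rewrite ltnS leq_min; apply/andP; split.
    by have := find_decr c; rewrite -/s.
  by rewrite Hsz.
- rewrite phi_ins //= revK index_cat (negbTE Ha1).
  have -> : index 1 (1 :: d) = 0 by [].
  have Hd : drop s.+1 (a ++ 1 :: d) = d.
    by rewrite -cat_rcons drop_size_cat // size_rcons Hsa.
  rewrite addn0 Hsa take_size_cat // Hd -Hvs /v revK /= incr_decr //.
Qed.

Lemma decomp n w : all (fun x => 1 <= x <= n) w ->
  all (fun x => 1 <= x < n) (filter (fun x => x != n) w).
Proof.
move=> H; rewrite all_filter; apply: sub_all H => x /andP[H1 H2].
by apply/implyP => Hx; rewrite H1 ltn_neqAle Hx H2.
Qed.

Lemma phi_good' n alpha N ell k w : 3 <= n -> k < Lval n alpha N ->
  inWgt n alpha N k w ->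
  [/\ inWle n alpha N k.+1 (phi n w),
      quinv' n alpha ell (phi n w) = quinv' n alpha ell w,
      midword n (phi n w) = midword n w
    & psi n (phi n w) = w].
Proof.
move=> Hn HkL Hg.
have Hall : all (fun x => 1 <= x <= n) w by case/andP: Hg => /and5P[].
have Hu := @decomp n w Hall; have Hc := size_gaps n w.
move: Hg; rewrite -{1}(ins_gaps n w) => Hg.
by have := @phi_good n alpha N ell k _ _ Hn Hu Hc HkL Hg; rewrite ins_gaps.
Qed.

Lemma psi_good' n alpha N k w : 3 <= n -> k < Lval n alpha N ->
  inWle n alpha N k.+1 w ->
  inWgt n alpha N k (psi n w) /\ phi n (psi n w) = w.
Proof.
move=> Hn HkL Hg.
have Hall : all (fun x => 1 <= x <= n) w by case/andP: Hg => /and5P[].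
have Hu := @decomp n w Hall; have Hc := size_gaps n w.
move: Hg; rewrite -{1}(ins_gaps n w) => Hg.
by have := @psi_good n alpha N k _ _ Hn Hu Hc HkL Hg; rewrite ins_gaps.
Qed.

Theorem mainTheorem16 (n : nat) (alpha : nat -> nat) (N ell : nat) :
  3 <= n ->
  (forall i, 2 <= i <= n.-1 -> 0 < alpha i) ->
  abs_alpha n alpha < N ->
  2 <= ell <= n ->
  exists phi : seq nat -> seq nat,
    (* phi is a bijection W^> -> W^<= *)
    (forall w, inWgt_all n alpha N w -> inWle_all n alpha N (phi w)) /\
    (forall w1 w2, inWgt_all n alpha N w1 -> inWgt_all n alpha N w2 ->
       phi w1 = phi w2 -> w1 = w2) /\
    (forall v, inWle_all n alpha N v -> exists2 w, inWgt_all n alpha N w & phi w = v) /\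
    (* (1) phi maps W_k^> bijectively onto W_{k+1}^<= for 0 <= k <= L-1 *)
    (forall k, k < Lval n alpha N ->
       (forall w, inWgt n alpha N k w -> inWle n alpha N k.+1 (phi w)) /\
       (forall v, inWle n alpha N k.+1 v ->
          exists2 w, inWgt n alpha N k w & phi w = v)) /\
    (* (2) quinv' preserved *)
    (forall w, inWgt_all n alpha N w -> quinv' n alpha ell (phi w) = quinv' n alpha ell w) /\
    (* (3) subword of letters 2..n-1 preserved *)
    (forall w, inWgt_all n alpha N w -> midword n (phi w) = midword n w).
Proof.
move=> Hn _ HN _.
have L0 : 0 < Lval n alpha N by rewrite /Lval subn_gt0.
have gtlt : forall k w, k <= Lval n alpha N -> inWgt n alpha N k w -> k < Lval n alpha N.
  move=> k w Hk /andP[HW]; rewrite /inWle HW /= negb_or => /andP[H _].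
  by rewrite ltn_neqAle H Hk.
have lepos : forall k v, inWle n alpha N k v -> 0 < k.
  move=> [|k] v //; rewrite /inWle => /andP[_]; rewrite /= orbF => /eqP H.
  by move: L0; rewrite -H.
exists (phi n); split; [|split; [|split; [|split; [|split]]]].
- move=> w [k [Hk Hg]]; have HkL := gtlt _ _ Hk Hg.
  have [H _ _ _] := @phi_good' n alpha N 0 _ _ Hn HkL Hg.
  by exists k.+1.
- move=> w1 w2 [k1 [Hk1 Hg1]] [k2 [Hk2 Hg2]] E.
  have [_ _ _ E1] := @phi_good' n alpha N 0 _ _ Hn (gtlt _ _ Hk1 Hg1) Hg1.
  have [_ _ _ E2] := @phi_good' n alpha N 0 _ _ Hn (gtlt _ _ Hk2 Hg2) Hg2.
  by rewrite -E1 -E2 E.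
- move=> v [[|k] [Hk Hl]]; first by have := lepos _ _ Hl.
  have [H1 H2] := @psi_good' n alpha N _ _ Hn Hk Hl.
  by exists (psi n v) => //; exists k; split => //; apply: ltnW.
- move=> k HkL; split.
    by move=> w Hg; have [H _ _ _] := @phi_good' n alpha N 0 _ _ Hn HkL Hg.
  move=> v Hl; have [H1 H2] := @psi_good' n alpha N _ _ Hn HkL Hl.
  by exists (psi n v).
- move=> w [k [Hk Hg]].
  by have [_ H _ _] := @phi_good' n alpha N ell _ _ Hn (gtlt _ _ Hk Hg) Hg.
- move=> w [k [Hk Hg]].
  by have [_ _ H _] := @phi_good' n alpha N 0 _ _ Hn (gtlt _ _ Hk Hg) Hg.
Qed.
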